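(* Let $k$ be an algebraically closed field of characteristic $0$, $\alpha\in k$ with $\alpha(1-\alpha^2)\neq 0$, and let $\mathcal L_1,\mathcal L_2,\mathcal L_3,\mathcal L_4,\mathcal L_{5a},\mathcal L_{5b},\mathcal L_{6a},\mathcal L_{6b}\subset\mathbb P^5$ be the curves defined in the context (the irreducible components of the line scheme of $A(\alpha)$). Then these components intersect at twenty distinct points. The pairs meeting in exactly one point are \[ \mathcal L_2\cap\mathcal L_3=\mathcal L_2\cap\mathcal L_4=\mathcal L_3\cap\mathcal L_4=\{E_2\},\quad \mathcal L_3\cap\mathcal L_{5a}=\{E_3\},\quad \mathcal L_4\cap\mathcal L_{6a}=\{E_4\},\quad \mathcal L_{5a}\cap\mathcal L_{6a}=\{E_5\}; \] the pairs meeting in two distinct points are \[ \begin{aligned} &\mathcal L_1\cap\mathcal L_3=\{(1,0,\pm i,0,0,0)\}, && \mathcal L_2\cap\mathcal L_{5b}=\{(0,0,0,0,a,\pm ib)\},\\ &\mathcal L_1\cap\mathcal L_4=\{(0,0,0,\alpha,0,1\pm d)\}, && \mathcal L_2\cap\mathcal L_{6b}=\{(b,0,0,0,\pm i,0)\},\\ &\mathcal L_1\cap\mathcal L_{5b}=\{(0,0,\pm ia,0,0,1)\}, && \mathcal L_{5a}\cap\mathcal L_{5b}=\{(0,0,b,0,\pm i,0)\},\\ &\mathcal L_1\cap\mathcal L_{6b}=\{(\pm ia,0,0,1,0,0)\}, && \mathcal L_{6a}\cap\mathcal L_{6b}=\{(0,0,0,b,\pm ia,0)\}, \end{aligned} \]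 where $i,a,b,d\in k$ satisfy $i^2=-1$, $a^2=\alpha$, $b^2=2$, $d^2=1-\alpha^2$; and all other pairwise intersections are empty.
   Context: Points of $\mathbb P^5$ are written in homogeneous coordinates $(M_{12},M_{13},M_{14},M_{23},M_{24},M_{34})$, and $E_j$ denotes the point whose $j$-th coordinate is $1$ and all others $0$. With $\mathcal V(S)$ the zero locus of $S$: $\mathcal L_1=\mathcal V(M_{13},M_{24},M_{12}M_{34}+M_{14}M_{23},M_{12}^2+M_{14}^2+\alpha M_{23}^2-2M_{23}M_{34}+\alpha M_{34}^2)$; $\mathcal L_2=\mathcal V(M_{14},M_{23},M_{12}M_{34}-M_{13}M_{24},M_{12}^2+2M_{24}^2+\alpha M_{34}^2)$; $\mathcal L_3=\mathcal V(M_{23},M_{24},M_{34},M_{12}^3-M_{13}^2M_{14}+M_{12}M_{14}^2)$; $\mathcal L_4=\mathcal V(M_{12},M_{14},M_{24},M_{13}^2M_{23}-\alpha M_{23}^2M_{34}+2M_{23}M_{34}^2-\alpha M_{34}^3)$; $\mathcal L_{5a}=\mathcal V(M_{12},M_{13},M_{23},M_{34})$; $\mathcal L_{5b}=\mathcal V(M_{12},M_{13},M_{23},M_{14}^2+2M_{24}^2+\alpha M_{34}^2)$; $\mathcal L_{6a}=\mathcal V(M_{12},M_{13},M_{14},M_{34})$; $\mathcal L_{6b}=\mathcal V(M_{13},M_{14},M_{34},M_{12}^2+\alpha M_{23}^2+2M_{24}^2)$. (These are the irreducible components of the line scheme of the algebra $A(\alpha)$ on generators $x_1,\dots,x_4$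 with relations $x_3x_1+x_1x_3=0$, $x_3x_2-x_2x_3=0$, $2x_2^2+\alpha x_3^2=x_1^2$, $x_4x_1+x_1x_4=0$, $x_2^2-x_4^2=0$, $x_4x_2+x_2x_4=x_3^2$.) *)

(* Defs.v *)
(* Points of P^5 over k are nonzero row vectors in k^6
   up to nonzero scalars; coordinate order (M12,M13,M14,M23,M24,M34). *)
From mathcomp Require Import all_boot all_order all_algebra.
Set Implicit Arguments. Unset Strict Implicit. Unset Printing Implicit Defensive.
Import GRing.Theory.
Local Open Scope ring_scope.

Section Defs.
Variable k : fieldType.

Definition coord (n : nat) (v : 'rV[k]_6) : k := v ord0 (inord n).
Definition M12 := coord 0. Definition M13 := coord 1. Definition M14 := coord 2.
Definition M23 := coord 3. Definition M24 := coord 4. Definition M34 := coord 5.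

Definition mkpt (x0 x1 x2 x3 x4 x5 : k) : 'rV[k]_6 :=
  \row_(j < 6) nth 0 [:: x0; x1; x2; x3; x4; x5] j.

(* E_j : j-th coordinate (1-indexed) equal to 1 *)
Definition E (j : nat) : 'rV[k]_6 := \row_(l < 6) (if l == j.-1 :> nat then 1 else 0).

Definition proj_eq (u v : 'rV[k]_6) : Prop := exists c : k, c != 0 /\ u = c *: v.

Inductive comp := L1 | L2 | L3 | L4 | L5a | L5b | L6a | L6b.

Definition onL (alpha : k) (c : comp) (v : 'rV[k]_6) : Prop :=
  match c with
  | L1 => [/\ M13 v = 0, M24 v = 0, M12 v * M34 v + M14 v * M23 v = 0 &
             M12 v ^+ 2 + M14 v ^+ 2 + alpha * M23 v ^+ 2 - 2 * M23 v * M34 v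
               + alpha * M34 v ^+ 2 = 0]
  | L2 => [/\ M14 v = 0, M23 v = 0, M12 v * M34 v - M13 v * M24 v = 0 &
             M12 v ^+ 2 + 2 * M24 v ^+ 2 + alpha * M34 v ^+ 2 = 0]
  | L3 => [/\ M23 v = 0, M24 v = 0, M34 v = 0 &
             M12 v ^+ 3 - M13 v ^+ 2 * M14 v + M12 v * M14 v ^+ 2 = 0]
  | L4 => [/\ M12 v = 0, M14 v = 0, M24 v = 0 &
             M13 v ^+ 2 * M23 v - alpha * M23 v ^+ 2 * M34 v
               + 2 * M23 v * M34 v ^+ 2 - alpha * M34 v ^+ 3 = 0]
  | L5a => [/\ M12 v = 0, M13 v = 0, M23 v = 0 & M34 v = 0]
  | L5b => [/\ M12 v = 0, M13 v = 0, M23 v = 0 &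
              M14 v ^+ 2 + 2 * M24 v ^+ 2 + alpha * M34 v ^+ 2 = 0]
  | L6a => [/\ M12 v = 0, M13 v = 0, M14 v = 0 & M34 v = 0]
  | L6b => [/\ M13 v = 0, M14 v = 0, M34 v = 0 &
              M12 v ^+ 2 + alpha * M23 v ^+ 2 + 2 * M24 v ^+ 2 = 0]
  end.

Definition meets (alpha : k) (c1 c2 : comp) (S : seq 'rV[k]_6) : Prop :=
  forall v : 'rV[k]_6, v != 0 ->
    (onL alpha c1 v /\ onL alpha c2 v) <-> (exists2 p, p \in S & proj_eq v p).

Definition distinct_points (S : seq 'rV[k]_6) : Prop :=
  (forall p, p \in S -> p != 0) /\
  (forall m n, (m < n < size S)%N -> ~ proj_eq (nth 0 S m) (nth 0 S n)).

End Defs.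

(* Main.v *)
Require Import Defs.
From mathcomp Require Import all_boot all_order all_algebra.
From mathcomp Require Import ring.
Import GRing.Theory.
Local Open Scope ring_scope.

Section Infra.
Variable k : fieldType.
Implicit Types (c : k).

Lemma mkptE (v : 'rV[k]_6) :
  v = mkpt (M12 v) (M13 v) (M14 v) (M23 v) (M24 v) (M34 v).
Proof.
apply/rowP => j; rewrite /mkpt mxE /M12 /M13 /M14 /M23 /M24 /M34 /Defs.coord.
case: j => [[|[|[|[|[|[|//]]]]]] Hj] /=; congr (v ord0 _); apply: val_inj; by rewrite /= inordK.
Qed.

Lemma M12_mk (x0 x1 x2 x3 x4 x5 : k) : M12 (mkpt x0 x1 x2 x3 x4 x5) = x0.
Proof. by rewrite /M12 /Defs.coord /mkpt /= mxE inordK. Qed.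
Lemma M13_mk (x0 x1 x2 x3 x4 x5 : k) : M13 (mkpt x0 x1 x2 x3 x4 x5) = x1.
Proof. by rewrite /M13 /Defs.coord /mkpt /= mxE inordK. Qed.
Lemma M14_mk (x0 x1 x2 x3 x4 x5 : k) : M14 (mkpt x0 x1 x2 x3 x4 x5) = x2.
Proof. by rewrite /M14 /Defs.coord /mkpt /= mxE inordK. Qed.
Lemma M23_mk (x0 x1 x2 x3 x4 x5 : k) : M23 (mkpt x0 x1 x2 x3 x4 x5) = x3.
Proof. by rewrite /M23 /Defs.coord /mkpt /= mxE inordK. Qed.
Lemma M24_mk (x0 x1 x2 x3 x4 x5 : k) : M24 (mkpt x0 x1 x2 x3 x4 x5) = x4.
Proof. by rewrite /M24 /Defs.coord /mkpt /= mxE inordK. Qed.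
Lemma M34_mk (x0 x1 x2 x3 x4 x5 : k) : M34 (mkpt x0 x1 x2 x3 x4 x5) = x5.
Proof. by rewrite /M34 /Defs.coord /mkpt /= mxE inordK. Qed.

Definition mkE := (M12_mk, M13_mk, M14_mk, M23_mk, M24_mk, M34_mk).

Lemma E2 : E k 2 = mkpt 0 1 0 0 0 0.
Proof. by apply/rowP => j; rewrite !mxE; case: j => [[|[|[|[|[|[|//]]]]]] Hj]. Qed.
Lemma E3 : E k 3 = mkpt 0 0 1 0 0 0.
Proof. by apply/rowP => j; rewrite !mxE; case: j => [[|[|[|[|[|[|//]]]]]] Hj]. Qed.
Lemma E4 : E k 4 = mkpt 0 0 0 1 0 0.
Proof. by apply/rowP => j; rewrite !mxE; case: j => [[|[|[|[|[|[|//]]]]]] Hj]. Qed.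
Lemma E5 : E k 5 = mkpt 0 0 0 0 1 0.
Proof. by apply/rowP => j; rewrite !mxE; case: j => [[|[|[|[|[|[|//]]]]]] Hj]. Qed.

Lemma mkpt_eq (x0 x1 x2 x3 x4 x5 y0 y1 y2 y3 y4 y5 : k) :
  mkpt x0 x1 x2 x3 x4 x5 = mkpt y0 y1 y2 y3 y4 y5 <->
  x0 = y0 /\ x1 = y1 /\ x2 = y2 /\ x3 = y3 /\ x4 = y4 /\ x5 = y5.
Proof.
split.
  move=> H; split; first by have := congr1 (@M12 k) H; rewrite !mkE.
  split; first by have := congr1 (@M13 k) H; rewrite !mkE.
  split; first by have := congr1 (@M14 k) H; rewrite !mkE.
  split; first by have := congr1 (@M23 k) H; rewrite !mkE.
  split; first by have := congr1 (@M24 k) H; rewrite !mkE.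
  by have := congr1 (@M34 k) H; rewrite !mkE.
by case=> -> [-> [-> [-> [-> ->]]]].
Qed.

Lemma scale_mkpt c (y0 y1 y2 y3 y4 y5 : k) :
  c *: mkpt y0 y1 y2 y3 y4 y5 = mkpt (c*y0) (c*y1) (c*y2) (c*y3) (c*y4) (c*y5).
Proof. by apply/rowP => j; rewrite !mxE; case: j => [[|[|[|[|[|[|//]]]]]] Hj]. Qed.

Lemma proj_mk (x0 x1 x2 x3 x4 x5 y0 y1 y2 y3 y4 y5 : k) :
  proj_eq (mkpt x0 x1 x2 x3 x4 x5) (mkpt y0 y1 y2 y3 y4 y5) <->
  exists c, c != 0 /\
  x0 = c*y0 /\ x1 = c*y1 /\ x2 = c*y2 /\ x3 = c*y3 /\ x4 = c*y4 /\ x5 = c*y5.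
Proof.
rewrite /proj_eq; split; case=> c [c0 H]; exists c; split => //.
  by move: H; rewrite scale_mkpt => /mkpt_eq.
by rewrite scale_mkpt; apply/mkpt_eq.
Qed.

Lemma mkpt_eq0 (x0 x1 x2 x3 x4 x5 : k) :
  (mkpt x0 x1 x2 x3 x4 x5 == 0) =
  [&& x0 == 0, x1 == 0, x2 == 0, x3 == 0, x4 == 0 & x5 == 0].
Proof.
have -> : (0 : 'rV[k]_6) = mkpt 0 0 0 0 0 0.
  by apply/rowP => j; rewrite !mxE; case: j => [[|[|[|[|[|[|//]]]]]] Hj].
apply/eqP/idP.
  by case/mkpt_eq => -> [-> [-> [-> [-> ->]]]]; rewrite eqxx.
by case/andP => /eqP-> /and5P[/eqP-> /eqP-> /eqP-> /eqP-> /eqP->].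
Qed.

Lemma ex2_nil (P : 'rV[k]_6 -> Prop) : (exists2 p, p \in [::] & P p) <-> False.
Proof. by split => // -[]. Qed.
Lemma ex2_1 (P : 'rV[k]_6 -> Prop) x : (exists2 p, p \in [:: x] & P p) <-> P x.
Proof. split; first by case=> p; rewrite inE => /eqP ->. by exists x; rewrite ?inE. Qed.
Lemma ex2_2 (P : 'rV[k]_6 -> Prop) x y :
  (exists2 p, p \in [:: x; y] & P p) <-> P x \/ P y.
Proof.
split; first by case=> p; rewrite !inE => /orP[] /eqP ->; auto.
by case=> H; [exists x | exists y]; rewrite ?inE ?eqxx ?orbT.
Qed.

Lemma meetsE (alpha : k) (c1 c2 : Defs.comp) (S : seq 'rV[k]_6) :
  (forall x0 x1 x2 x3 x4 x5 : k,
     ~~ [&& x0 == 0, x1 == 0, x2 == 0, x3 == 0, x4 == 0 & x5 == 0] ->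
     (onL alpha c1 (mkpt x0 x1 x2 x3 x4 x5) /\ onL alpha c2 (mkpt x0 x1 x2 x3 x4 x5))
     <-> (exists2 p, p \in S & proj_eq (mkpt x0 x1 x2 x3 x4 x5) p)) ->
  meets alpha c1 c2 S.
Proof. move=> H v; rewrite (mkptE v) mkpt_eq0; exact: H. Qed.


Lemma meets0E (alpha : k) (c1 c2 : Defs.comp) :
  (forall x0 x1 x2 x3 x4 x5 : k,
     ~~ [&& x0 == 0, x1 == 0, x2 == 0, x3 == 0, x4 == 0 & x5 == 0] ->
     onL alpha c1 (mkpt x0 x1 x2 x3 x4 x5) -> onL alpha c2 (mkpt x0 x1 x2 x3 x4 x5) -> False) ->
  meets alpha c1 c2 [::].
Proof.
move=> H; apply: meetsE => x0 x1 x2 x3 x4 x5 nz; split; last by case.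
by case=> h1 h2; case: (H _ _ _ _ _ _ nz h1 h2).
Qed.

Lemma meets1E (alpha : k) (c1 c2 : Defs.comp) y :
  (forall x0 x1 x2 x3 x4 x5 : k,
     ~~ [&& x0 == 0, x1 == 0, x2 == 0, x3 == 0, x4 == 0 & x5 == 0] ->
     (onL alpha c1 (mkpt x0 x1 x2 x3 x4 x5) /\ onL alpha c2 (mkpt x0 x1 x2 x3 x4 x5))
     <-> proj_eq (mkpt x0 x1 x2 x3 x4 x5) y) ->
  meets alpha c1 c2 [:: y].
Proof.
move=> H; apply: meetsE => x0 x1 x2 x3 x4 x5 nz.
apply: iff_trans (H _ _ _ _ _ _ nz) _; exact: iff_sym (ex2_1 _ _).
Qed.

Lemma meets2E (alpha : k) (c1 c2 : Defs.comp) y y' :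
  (forall x0 x1 x2 x3 x4 x5 : k,
     ~~ [&& x0 == 0, x1 == 0, x2 == 0, x3 == 0, x4 == 0 & x5 == 0] ->
     (onL alpha c1 (mkpt x0 x1 x2 x3 x4 x5) /\ onL alpha c2 (mkpt x0 x1 x2 x3 x4 x5))
     <-> (proj_eq (mkpt x0 x1 x2 x3 x4 x5) y \/ proj_eq (mkpt x0 x1 x2 x3 x4 x5) y')) ->
  meets alpha c1 c2 [:: y; y'].
Proof.
move=> H; apply: meetsE => x0 x1 x2 x3 x4 x5 nz.
apply: iff_trans (H _ _ _ _ _ _ nz) _; exact: iff_sym (ex2_2 _ _ _).
Qed.

Lemma La (x c : k) : x != 0 -> x = c * 0 -> False.
Proof. by rewrite mulr0 => /eqP. Qed.
Lemma Lb (x c : k) : c != 0 -> x != 0 -> 0 = c * x -> False.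
Proof. by move=> c0 x0 /esym/eqP; rewrite mulf_eq0 (negbTE c0) (negbTE x0). Qed.
Lemma Lc (x c : k) : x != 0 -> x = c * x -> c = 1.
Proof. by move=> x0 e; apply: (mulIf x0); rewrite mul1r -e. Qed.
Lemma Ld (y : k) : (2 : k) != 0 -> y != 0 -> y = 1 * - y -> False.
Proof.
move=> two y0; rewrite mul1r => /eqP; rewrite -subr_eq0 opprK -mulr2n -mulr_natr.
by rewrite mulf_eq0 (negbTE y0) (negbTE two).
Qed.
Lemma Le (d : k) : (2 : k) != 0 -> d != 0 -> 1 + d = 1 * (1 - d) -> False.
Proof.
move=> two d0; rewrite mul1r => e; refine (@Ld d two d0 _); rewrite mul1r.
by apply: (addrI 1); rewrite e.
Qed.

Lemma sq0 (x : k) : x ^+ 2 = 0 -> x = 0.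
Proof. by move/eqP; rewrite sqrf_eq0 => /eqP. Qed.
Lemma m0 (x y : k) : x != 0 -> x * y ^+ 2 = 0 -> y = 0.
Proof. by move=> x0 /eqP; rewrite mulf_eq0 (negbTE x0) sqrf_eq0 => /eqP. Qed.
Lemma m03 (x y : k) : x != 0 -> x * y ^+ 3 = 0 -> y = 0.
Proof. by move=> x0 /eqP; rewrite mulf_eq0 (negbTE x0) expf_eq0 /= => /eqP. Qed.
Lemma sq_cases (x y : k) : x ^+ 2 = y ^+ 2 -> x = y \/ x = - y.
Proof. by move/eqP; rewrite eqf_sqr => /orP[] /eqP; auto. Qed.

End Infra.
Arguments La {k}. Arguments Lb {k}. Arguments Lc {k}. Arguments Ld {k}. Arguments Le {k}.
Arguments sq0 {k}. Arguments m0 {k}. Arguments m03 {k}. Arguments sq_cases {k}.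

Lemma lc1 {k : fieldType} (c1 : k) {x y l1 r1 : k} :
  l1 = r1 -> x - y = c1 * (l1 - r1) -> x = y.
Proof. by move=> ->; rewrite !subrr mulr0 => /eqP; rewrite subr_eq0 => /eqP. Qed.
Lemma lc2 {k : fieldType} (c1 c2 : k) {x y l1 r1 l2 r2 : k} :
  l1 = r1 -> l2 = r2 -> x - y = c1 * (l1 - r1) + c2 * (l2 - r2) -> x = y.
Proof. by move=> -> ->; rewrite !subrr !mulr0 addr0 => /eqP; rewrite subr_eq0 => /eqP. Qed.
Lemma lc3 {k : fieldType} (c1 c2 c3 : k) {x y l1 r1 l2 r2 l3 r3 : k} :
  l1 = r1 -> l2 = r2 -> l3 = r3 ->
  x - y = c1 * (l1 - r1) + c2 * (l2 - r2) + c3 * (l3 - r3) -> x = y.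
Proof. by move=> -> -> ->; rewrite !subrr !mulr0 !addr0 => /eqP; rewrite subr_eq0 => /eqP. Qed.

Ltac nz := rewrite ?oppr_eq0 ?mulf_eq0 ?negb_or ?oner_eq0 //;
  repeat (apply/andP; split); assumption.

Ltac kill c0 := match goal with
 | e : _ = _ |- _ => exfalso;
     first [ apply: (La _ _ _ e); nz | apply: (Lb _ _ c0 _ e); nz ]
 end.

Ltac kill2 two d0 := match goal with
 | e : ?x = ?c * ?x |- _ =>
   have ? : c = 1 by apply: (Lc _ _ _ e); nz
 end;
 subst;
 match goal with
 | e : _ = _ |- _ => exfalso;
     first [ apply: (Ld _ two _ e); nz | exact: (Le _ two d0 e) ]
 end.

Theorem corollary3p3 (k : closedFieldType) (hchar : [pchar k] =i pred0)
  (alpha : k) (halpha : alpha * (1 - alpha ^+ 2) != 0)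
  (i a b d : k) (hi : i ^+ 2 = -1) (ha : a ^+ 2 = alpha) (hb : b ^+ 2 = 2)
  (hd : d ^+ 2 = 1 - alpha ^+ 2) :
  let m := meets alpha in
  distinct_points
    [:: E k 2; E k 3; E k 4; E k 5;
        mkpt 1 0 i 0 0 0; mkpt 1 0 (- i) 0 0 0;
        mkpt 0 0 0 alpha 0 (1 + d); mkpt 0 0 0 alpha 0 (1 - d);
        mkpt 0 0 (i * a) 0 0 1; mkpt 0 0 (- (i * a)) 0 0 1;
        mkpt (i * a) 0 0 1 0 0; mkpt (- (i * a)) 0 0 1 0 0;
        mkpt 0 0 0 0 a (i * b); mkpt 0 0 0 0 a (- (i * b));
        mkpt b 0 0 0 i 0; mkpt b 0 0 0 (- i) 0;
        mkpt 0 0 b 0 i 0; mkpt 0 0 b 0 (- i) 0;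
        mkpt 0 0 0 b (i * a) 0; mkpt 0 0 0 b (- (i * a)) 0] /\
  m L2 L3 [:: E k 2] /\ m L2 L4 [:: E k 2] /\ m L3 L4 [:: E k 2] /\
  m L3 L5a [:: E k 3] /\ m L4 L6a [:: E k 4] /\ m L5a L6a [:: E k 5] /\
  m L1 L3 [:: mkpt 1 0 i 0 0 0; mkpt 1 0 (- i) 0 0 0] /\
  m L1 L4 [:: mkpt 0 0 0 alpha 0 (1 + d); mkpt 0 0 0 alpha 0 (1 - d)] /\
  m L1 L5b [:: mkpt 0 0 (i * a) 0 0 1; mkpt 0 0 (- (i * a)) 0 0 1] /\
  m L1 L6b [:: mkpt (i * a) 0 0 1 0 0; mkpt (- (i * a)) 0 0 1 0 0] /\
  m L2 L5b [:: mkpt 0 0 0 0 a (i * b); mkpt 0 0 0 0 a (- (i * b))] /\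
  m L2 L6b [:: mkpt b 0 0 0 i 0; mkpt b 0 0 0 (- i) 0] /\
  m L5a L5b [:: mkpt 0 0 b 0 i 0; mkpt 0 0 b 0 (- i) 0] /\
  m L6a L6b [:: mkpt 0 0 0 b (i * a) 0; mkpt 0 0 0 b (- (i * a)) 0] /\
  m L1 L2 [::] /\ m L1 L5a [::] /\ m L1 L6a [::] /\
  m L2 L5a [::] /\ m L2 L6a [::] /\
  m L3 L5b [::] /\ m L3 L6a [::] /\ m L3 L6b [::] /\
  m L4 L5a [::] /\ m L4 L5b [::] /\ m L4 L6b [::] /\
  m L5a L6b [::] /\ m L5b L6a [::] /\ m L5b L6b [::].
Proof.
move=> m; rewrite /m {m} E2 E3 E4 E5.
have two : (2 : k) != 0 by rewrite ((pcharf0P k).1 hchar 2).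
move: halpha; rewrite mulf_eq0 negb_or => /andP[al0 al2].
have i0 : i != 0.
  by apply/eqP => i0; move: hi; rewrite i0 expr0n /= => /eqP; rewrite eq_sym oppr_eq0 oner_eq0.
have a0 : a != 0 by apply/eqP => a0; move: al0; rewrite -ha a0 expr0n eqxx.
have b0 : b != 0 by apply/eqP => b0; move: two; rewrite -hb b0 expr0n eqxx.
have d0 : d != 0.
  by apply/eqP => d0; move: al2; rewrite -hd d0 expr0n eqxx.
have hdd : (1 + d) * (1 - d) = alpha ^+ 2 by ring: hd.
have al20 : alpha ^+ 2 != 0 by rewrite expf_neq0.
have dp : 1 + d != 0.
  by apply/eqP => e; move: al20; rewrite -hdd e mul0r eqxx.
have dm : 1 - d != 0.
  by apply/eqP => e; move: al20; rewrite -hdd e mulr0 eqxx.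
split.
  split.
    apply/allP; rewrite /= !mkpt_eq0 ?eqxx ?oppr_eq0 ?mulf_eq0 ?(negbTE i0) ?(negbTE a0) ?(negbTE b0)
        ?(negbTE al0) ?(negbTE dp) ?(negbTE dm) ?oner_eq0 ?andbF //.
  move=> mm nn /andP[]; case: nn => [|[|[|[|[|[|[|[|[|[|[|[|[|[|[|[|[|[|[|[|nn]]]]]]]]]]]]]]]]]]]]; case: mm => [|[|[|[|[|[|[|[|[|[|[|[|[|[|[|[|[|[|[|[|mm]]]]]]]]]]]]]]]]]]]] //= _ _;
  rewrite proj_mk; case=> c [c0 [e0 [e1 [e2 [e3 [e4 e5]]]]]];
  first [kill c0 | kill2 two d0].
subst alpha.
split.
{ apply: meets1E => p q r s t u nz0; rewrite /onL !mkE /=; split; last first.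
    move/proj_mk => [c [c0 [? [? [? [? [? ?]]]]]]]; subst; split; split; ring: hi hb hd.
  case=> [[h1 h2 h3 h4] [h5 h6 h7 h8]]; subst.
  have ? : p = 0 by apply: sq0; refine (lc1 1 h4 _); ring.
  subst.
  rewrite !eqxx /= ?andbT in nz0.
  apply/proj_mk; exists q; split => //; rewrite ?mulr0 ?mulr1; do !split. }
split.
{ apply: meets1E => p q r s t u nz0; rewrite /onL !mkE /=; split; last first.
    move/proj_mk => [c [c0 [? [? [? [? [? ?]]]]]]]; subst; split; split; ring: hi hb hd.
  case=> [[h1 h2 h3 h4] [h5 h6 h7 h8]]; subst.
  have ? : u = 0 by apply: (m0 _ _ al0); refine (lc1 1 h4 _); ring.
  subst.
  rewrite !eqxx /= ?andbT in nz0.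
  apply/proj_mk; exists q; split => //; rewrite ?mulr0 ?mulr1; do !split. }
split.
{ apply: meets1E => p q r s t u nz0; rewrite /onL !mkE /=; split; last first.
    move/proj_mk => [c [c0 [? [? [? [? [? ?]]]]]]]; subst; split; split; ring: hi hb hd.
  case=> [[h1 h2 h3 h4] [h5 h6 h7 h8]]; subst.
  rewrite !eqxx /= ?andbT in nz0.
  apply/proj_mk; exists q; split => //; rewrite ?mulr0 ?mulr1; do !split. }
split.
{ apply: meets1E => p q r s t u nz0; rewrite /onL !mkE /=; split; last first.
    move/proj_mk => [c [c0 [? [? [? [? [? ?]]]]]]]; subst; split; split; ring: hi hb hd.
  case=> [[h1 h2 h3 h4] [h5 h6 h7 h8]]; subst.
  rewrite !eqxx /= ?andbT in nz0.
  apply/proj_mk; exists r; split => //; rewrite ?mulr0 ?mulr1; do !split. }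
split.
{ apply: meets1E => p q r s t u nz0; rewrite /onL !mkE /=; split; last first.
    move/proj_mk => [c [c0 [? [? [? [? [? ?]]]]]]]; subst; split; split; ring: hi hb hd.
  case=> [[h1 h2 h3 h4] [h5 h6 h7 h8]]; subst.
  rewrite !eqxx /= ?andbT in nz0.
  apply/proj_mk; exists s; split => //; rewrite ?mulr0 ?mulr1; do !split. }
split.
{ apply: meets1E => p q r s t u nz0; rewrite /onL !mkE /=; split; last first.
    move/proj_mk => [c [c0 [? [? [? [? [? ?]]]]]]]; subst; split; split; ring: hi hb hd.
  case=> [[h1 h2 h3 h4] [h5 h6 h7 h8]]; subst.
  rewrite !eqxx /= ?andbT in nz0.
  apply/proj_mk; exists t; split => //; rewrite ?mulr0 ?mulr1; do !split. }
split.
{ apply: meets2E => p q r s t u nz0; rewrite /onL !mkE /=; split; last first.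
    case=> /proj_mk [c [c0 [? [? [? [? [? ?]]]]]]]; subst; split; split; ring: hi hb hd.
  case=> [[h1 h2 h3 h4] [h5 h6 h7 h8]]; subst.
  have e : r ^+ 2 = (i * p) ^+ 2 by refine (lc2 1 (- p ^+ 2) h4 hi _); ring.
  have p0 : p != 0.
    apply/eqP => p0; subst p; move: nz0.
    have -> : r = 0 by apply: sq0; rewrite e; ring.
    by rewrite !eqxx.
  case/sq_cases: e => ->; [left | right]; apply/proj_mk; exists p; split => //; do !split; ring. }
split.
{ apply: meets2E => p q r s t u nz0; rewrite /onL !mkE /=; split; last first.
    case=> /proj_mk [c [c0 [? [? [? [? [? ?]]]]]]]; subst; split; split; ring: hi hb hd.
  case=> [[h1 h2 h3 h4] [h5 h6 h7 h8]]; subst.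
  have e : (a ^+ 2 * s - u) ^+ 2 = (d * u) ^+ 2.
    by refine (lc2 (a ^+ 2) (- u ^+ 2) h4 hd _); ring.
  have u0 : u != 0.
    apply/eqP => u0; subst u; move: nz0.
    have -> : s = 0 by apply: (m0 _ _ al0); refine (lc1 1 h4 _); ring.
    by rewrite !eqxx.
  case/sq_cases: e => e.
    have e1 : s * (1 - d) = u * a ^+ 2.
      by apply: (mulfI al0); refine (lc2 (1 - d) (- u) e hd _); ring.
    right; apply/proj_mk; exists (u / (1 - d)); split.
      by rewrite mulf_neq0 // invr_eq0.
    do !split; rewrite ?mulr0 //; last by rewrite mulfVK.
    by apply: (mulIf dm); rewrite e1; field; exact: dm.
  have e1 : s * (1 + d) = u * a ^+ 2.
    by apply: (mulfI al0); refine (lc2 (1 + d) (- u) e hd _); ring.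
  left; apply/proj_mk; exists (u / (1 + d)); split.
    by rewrite mulf_neq0 // invr_eq0.
  do !split; rewrite ?mulr0 //; last by rewrite mulfVK.
  by apply: (mulIf dp); rewrite e1; field; exact: dp. }
split.
{ apply: meets2E => p q r s t u nz0; rewrite /onL !mkE /=; split; last first.
    case=> /proj_mk [c [c0 [? [? [? [? [? ?]]]]]]]; subst; split; split; ring: hi hb hd.
  case=> [[h1 h2 h3 h4] [h5 h6 h7 h8]]; subst.
  have e : r ^+ 2 = (i * a * u) ^+ 2 by refine (lc2 1 (- (a ^+ 2 * u ^+ 2)) h4 hi _); ring.
  have u0 : u != 0.
    apply/eqP => u0; subst u; move: nz0.
    have -> : r = 0 by apply: sq0; refine (lc1 1 h4 _); ring.
    by rewrite !eqxx.
  case/sq_cases: e => ->; [left | right]; apply/proj_mk; exists u; split => //; do !split; ring. }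
split.
{ apply: meets2E => p q r s t u nz0; rewrite /onL !mkE /=; split; last first.
    case=> /proj_mk [c [c0 [? [? [? [? [? ?]]]]]]]; subst; split; split; ring: hi hb hd.
  case=> [[h1 h2 h3 h4] [h5 h6 h7 h8]]; subst.
  have e : p ^+ 2 = (i * a * s) ^+ 2 by refine (lc2 1 (- (a ^+ 2 * s ^+ 2)) h4 hi _); ring.
  have s0 : s != 0.
    apply/eqP => s0; subst s; move: nz0.
    have -> : p = 0 by apply: sq0; refine (lc1 1 h4 _); ring.
    by rewrite !eqxx.
  case/sq_cases: e => ->; [left | right]; apply/proj_mk; exists s; split => //; do !split; ring. }
split.
{ apply: meets2E => p q r s t u nz0; rewrite /onL !mkE /=; split; last first.
    case=> /proj_mk [c [c0 [? [? [? [? [? ?]]]]]]]; subst; split; split; ring: hi hb hd.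
  case=> [[h1 h2 h3 h4] [h5 h6 h7 h8]]; subst.
  have e : (a * u) ^+ 2 = (i * b * t) ^+ 2 by refine (lc3 1 (- (b ^+ 2 * t ^+ 2)) (t ^+ 2) h4 hi hb _); ring.
  have t0 : t != 0.
    apply/eqP => t0; subst t; move: nz0.
    have -> : u = 0 by apply: (m0 _ _ al0); refine (lc1 1 h4 _); ring.
    by rewrite !eqxx.
  case/sq_cases: e => e; [left | right]; apply/proj_mk; exists (t / a); split;
    rewrite ?mulf_neq0 ?invr_eq0 //; do !split; rewrite ?mulr0 ?mulfVK //;
    by apply: (mulfI a0); rewrite e; field; exact: a0. }
split.
{ apply: meets2E => p q r s t u nz0; rewrite /onL !mkE /=; split; last first.
    case=> /proj_mk [c [c0 [? [? [? [? [? ?]]]]]]]; subst; split; split; ring: hi hb hd.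
  case=> [[h1 h2 h3 h4] [h5 h6 h7 h8]]; subst.
  have e : (b * t) ^+ 2 = (i * p) ^+ 2 by refine (lc3 1 (- p ^+ 2) (t ^+ 2) h4 hi hb _); ring.
  have p0 : p != 0.
    apply/eqP => p0; subst p; move: nz0.
    have -> : t = 0 by apply: (m0 _ _ two); refine (lc1 1 h4 _); ring.
    by rewrite !eqxx.
  case/sq_cases: e => e; [left | right]; apply/proj_mk; exists (p / b); split;
    rewrite ?mulf_neq0 ?invr_eq0 //; do !split; rewrite ?mulr0 ?mulfVK //;
    by apply: (mulfI b0); rewrite e; field; exact: b0. }
split.
{ apply: meets2E => p q r s t u nz0; rewrite /onL !mkE /=; split; last first.
    case=> /proj_mk [c [c0 [? [? [? [? [? ?]]]]]]]; subst; split; split; ring: hi hb hd.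
  case=> [[h1 h2 h3 h4] [h5 h6 h7 h8]]; subst.
  have e : (b * t) ^+ 2 = (i * r) ^+ 2 by refine (lc3 1 (- r ^+ 2) (t ^+ 2) h8 hi hb _); ring.
  have r0 : r != 0.
    apply/eqP => r0; subst r; move: nz0.
    have -> : t = 0 by apply: (m0 _ _ two); refine (lc1 1 h8 _); ring.
    by rewrite !eqxx.
  case/sq_cases: e => e; [left | right]; apply/proj_mk; exists (r / b); split;
    rewrite ?mulf_neq0 ?invr_eq0 //; do !split; rewrite ?mulr0 ?mulfVK //;
    by apply: (mulfI b0); rewrite e; field; exact: b0. }
split.
{ apply: meets2E => p q r s t u nz0; rewrite /onL !mkE /=; split; last first.
    case=> /proj_mk [c [c0 [? [? [? [? [? ?]]]]]]]; subst; split; split; ring: hi hb hd.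
  case=> [[h1 h2 h3 h4] [h5 h6 h7 h8]]; subst.
  have e : (b * t) ^+ 2 = (i * a * s) ^+ 2 by refine (lc3 1 (- (a ^+ 2 * s ^+ 2)) (t ^+ 2) h8 hi hb _); ring.
  have s0 : s != 0.
    apply/eqP => s0; subst s; move: nz0.
    have -> : t = 0 by apply: (m0 _ _ two); refine (lc1 1 h8 _); ring.
    by rewrite !eqxx.
  case/sq_cases: e => e; [left | right]; apply/proj_mk; exists (s / b); split;
    rewrite ?mulf_neq0 ?invr_eq0 //; do !split; rewrite ?mulr0 ?mulfVK //;
    by apply: (mulfI b0); rewrite e; field; exact: b0. }
split.
{ apply: meets0E => p q r s t u nz0; rewrite /onL !mkE /= => [[h1 h2 h3 h4] [h5 h6 h7 h8]]; subst.
  have : p * u = 0 by refine (lc1 1 h3 _); ring.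
  move/eqP; rewrite mulf_eq0 => /orP[] /eqP ?; subst.
    have ? : u = 0 by apply: (m0 _ _ al0); refine (lc1 1 h8 _); ring.
    by subst; move: nz0; rewrite !eqxx.
  have ? : p = 0 by apply: sq0; refine (lc1 1 h8 _); ring.
  subst.
  by move: nz0; rewrite !eqxx. }
split.
{ apply: meets0E => p q r s t u nz0; rewrite /onL !mkE /= => [[h1 h2 h3 h4] [h5 h6 h7 h8]]; subst.
  have ? : r = 0 by apply: sq0; refine (lc1 1 h4 _); ring.
  subst.
  by move: nz0; rewrite !eqxx. }
split.
{ apply: meets0E => p q r s t u nz0; rewrite /onL !mkE /= => [[h1 h2 h3 h4] [h5 h6 h7 h8]]; subst.
  have ? : s = 0 by apply: (m0 _ _ al0); refine (lc1 1 h4 _); ring.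
  subst.
  by move: nz0; rewrite !eqxx. }
split.
{ apply: meets0E => p q r s t u nz0; rewrite /onL !mkE /= => [[h1 h2 h3 h4] [h5 h6 h7 h8]]; subst.
  have ? : t = 0 by apply: (m0 _ _ two); refine (lc1 1 h4 _); ring.
  subst.
  by move: nz0; rewrite !eqxx. }
split.
{ apply: meets0E => p q r s t u nz0; rewrite /onL !mkE /= => [[h1 h2 h3 h4] [h5 h6 h7 h8]]; subst.
  have ? : t = 0 by apply: (m0 _ _ two); refine (lc1 1 h4 _); ring.
  subst.
  by move: nz0; rewrite !eqxx. }
split.
{ apply: meets0E => p q r s t u nz0; rewrite /onL !mkE /= => [[h1 h2 h3 h4] [h5 h6 h7 h8]]; subst.
  have ? : r = 0 by apply: sq0; refine (lc1 1 h8 _); ring.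
  subst.
  by move: nz0; rewrite !eqxx. }
split.
{ apply: meets0E => p q r s t u nz0; rewrite /onL !mkE /= => [[h1 h2 h3 h4] [h5 h6 h7 h8]]; subst.

  by move: nz0; rewrite !eqxx. }
split.
{ apply: meets0E => p q r s t u nz0; rewrite /onL !mkE /= => [[h1 h2 h3 h4] [h5 h6 h7 h8]]; subst.
  have ? : p = 0 by apply: sq0; refine (lc1 1 h8 _); ring.
  subst.
  by move: nz0; rewrite !eqxx. }
split.
{ apply: meets0E => p q r s t u nz0; rewrite /onL !mkE /= => [[h1 h2 h3 h4] [h5 h6 h7 h8]]; subst.

  by move: nz0; rewrite !eqxx. }
split.
{ apply: meets0E => p q r s t u nz0; rewrite /onL !mkE /= => [[h1 h2 h3 h4] [h5 h6 h7 h8]]; subst.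
  have ? : u = 0 by apply: (m03 _ _ al0); refine (lc1 (-1) h4 _); ring.
  subst.
  by move: nz0; rewrite !eqxx. }
split.
{ apply: meets0E => p q r s t u nz0; rewrite /onL !mkE /= => [[h1 h2 h3 h4] [h5 h6 h7 h8]]; subst.
  have ? : s = 0 by apply: (m0 _ _ al0); refine (lc1 1 h8 _); ring.
  subst.
  by move: nz0; rewrite !eqxx. }
split.
{ apply: meets0E => p q r s t u nz0; rewrite /onL !mkE /= => [[h1 h2 h3 h4] [h5 h6 h7 h8]]; subst.
  have ? : t = 0 by apply: (m0 _ _ two); refine (lc1 1 h8 _); ring.
  subst.
  by move: nz0; rewrite !eqxx. }
split.
{ apply: meets0E => p q r s t u nz0; rewrite /onL !mkE /= => [[h1 h2 h3 h4] [h5 h6 h7 h8]]; subst.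
  have ? : t = 0 by apply: (m0 _ _ two); refine (lc1 1 h4 _); ring.
  subst.
  by move: nz0; rewrite !eqxx. }
{ apply: meets0E => p q r s t u nz0; rewrite /onL !mkE /= => [[h1 h2 h3 h4] [h5 h6 h7 h8]]; subst.
  have ? : t = 0 by apply: (m0 _ _ two); refine (lc1 1 h4 _); ring.
  subst.
  by move: nz0; rewrite !eqxx. }
Qed.
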